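(* Let $r$ be a non-negative integer and $B(x,y)=(-1)^{x+y}$. Then there exist $C\in\mathbb{Q}(q)$ and a $q$-polynomial $T(x,y)$ in $x$ and $y$ over $\mathbb{Q}$ such that $D(r,B)(x,y)=(-1)^{x+y}q^{r(x+y)}C+T(x,y)$ for all integers $x,y$.
   Context: $q$ is an indeterminate. Sums use the convention: $\sum_{i=a}^bf(i)=f(a)+\cdots+f(b)$ if $a\le b$, $0$ if $b=a-1$, and $-f(b+1)-\cdots-f(a-1)$ if $b+1\le a-1$. $D(0,B)=B$ and $D(r,B)(x,y)=\sum_{x'=x+1}^{y+1}\sum_{y'=x}^{y}D(r-1,B)(x',y')\,q^{x'+y'}$. A $q$-polynomial in $x,y$ over $\mathbb{Q}$ is a polynomial in $q^x,q^y$ with coefficients in $\mathbb{Q}(q)$. *)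

(* Defs.v *)
From HB Require Import structures.
From mathcomp Require Import all_boot all_order all_algebra.
From mathcomp Require Import fraction.
Set Implicit Arguments. Unset Strict Implicit. Unset Printing Implicit Defensive.
Import Order.TTheory GRing.Theory Num.Theory.
Local Open Scope ring_scope.

Definition Qq : fieldType := {fraction {poly rat}}.
Definition q : Qq := @FracField.tofrac {poly rat} 'X.

(* Generalised sum convention over integers:
   sum_{i=a}^b f i = f a + ... + f b        if a <= b,
                   = 0                      if b = a - 1,
                   = -(f (b+1) + ... + f (a-1)) if b+1 <= a-1. *)
Definition gsum (a b : int) (f : int -> Qq) : Qq :=
  if (a <= b)%R then \sum_(k < absz (b - a + 1)%R) f (a + (k : nat)%:Z)%R
  else - \sum_(k < absz (a - b - 1)%R) f (b + 1 + (k : nat)%:Z)%R.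

Fixpoint D (r : nat) (B : int -> int -> Qq) (x y : int) : Qq :=
  match r with
  | O => B x y
  | r'.+1 => gsum (x + 1) (y + 1) (fun x' =>
               gsum x y (fun y' => D r' B x' y' * q ^ (x' + y')))
  end.

(* A q-polynomial in x,y over Q: T(x,y) = P(q^x, q^y) for a bivariate
   polynomial P with coefficients in Q(q) (inner variable <-> q^x,
   outer variable <-> q^y). *)
Definition qpoly_eval (P : {poly {poly Qq}}) (x y : int) : Qq :=
  (P.[(q ^ y)%:P]).[q ^ x].

(* Main.v *)
Require Import Defs.
From HB Require Import structures.
From mathcomp Require Import all_boot all_order all_algebra.
From mathcomp Require Import fraction.
From mathcomp Require Import ring zify.
Import Order.TTheory GRing.Theory Num.Theory.
Local Open Scope ring_scope.


Lemma q_neq0 : q != 0.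
Proof. by rewrite /q tofrac_eq0 polyX_eq0. Qed.

Lemma qXn_neq1 (n : nat) : (0 < n)%N -> q ^+ n != 1.
Proof.
move=> n0; rewrite /q -tofracXn -[1 : Qq]/(FracField.tofrac 1) tofrac_eq.
apply/eqP => h; have := size_polyXn rat n; rewrite h size_poly1; by case: n n0 {h}.
Qed.

Lemma sum_tele (n : nat) (u : nat -> Qq) : \sum_(k < n) (u k.+1 - u k) = u n - u 0%N.
Proof.
elim: n => [|n IH]; first by rewrite big_ord0 subrr.
by rewrite big_ord_recr /= IH addrC addrA subrK.
Qed.

Lemma gsum_tele a b (f g : int -> Qq) :
  (forall k, f k = g (k + 1) - g k) -> gsum a b f = g (b + 1) - g a.
Proof.
move=> H; rewrite /gsum; case: ifP => hab.
  rewrite (eq_bigr (fun k : 'I_ _ => g (a + (k.+1 : nat)%:Z) - g (a + (k : nat)%:Z))); last first.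
    by move=> k _; rewrite H; congr (g _ - _); rewrite intS; ring.
  rewrite (sum_tele _ (fun k => g (a + k%:Z))) addr0 gez0_abs; last by lia.
  congr (_ - _); congr g; ring.
rewrite (eq_bigr (fun k : 'I_ _ => g (b + 1 + (k.+1 : nat)%:Z) - g (b + 1 + (k : nat)%:Z))); last first.
  by move=> k _; rewrite H; congr (g _ - _); rewrite intS; ring.
rewrite (sum_tele _ (fun k => g (b + 1 + k%:Z))) addr0 gez0_abs; last by lia.
rewrite opprB; congr (_ - _); congr g; ring.
Qed.

Lemma gsum_ext a b (f g : int -> Qq) : (forall k, f k = g k) -> gsum a b f = gsum a b g.
Proof. by move=> H; rewrite /gsum; case: ifP => _; [|congr (- _)]; apply: eq_bigr => k _; rewrite H. Qed.

Lemma gsumD a b (f g : int -> Qq) : gsum a b (fun k => f k + g k) = gsum a b f + gsum a b g.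
Proof. by rewrite /gsum; case: ifP => _; rewrite big_split //= opprD. Qed.

Lemma gsumMl a b c (f : int -> Qq) : gsum a b (fun k => c * f k) = c * gsum a b f.
Proof. by rewrite /gsum; case: ifP => _; rewrite -mulr_sumr // mulrN. Qed.

Lemma gsumMr a b c (f : int -> Qq) : gsum a b (fun k => f k * c) = gsum a b f * c.
Proof. by rewrite /gsum; case: ifP => _; rewrite -mulr_suml // mulNr. Qed.

Lemma gsum0 a b : gsum a b (fun _ => 0) = 0.
Proof. by rewrite /gsum; case: ifP => _; rewrite big1 ?oppr0. Qed.

Lemma gsum_geom a b (t : Qq) : t != 0 -> t != 1 ->
  gsum a b (fun k => t ^ k) = (t ^ (b + 1) - t ^ a) / (t - 1).
Proof.
move=> t0 t1; rewrite mulrBl; apply: (@gsum_tele _ _ _ (fun k => t ^ k / (t - 1))) => k.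
rewrite expfzDr // expr1z; have : t - 1 != 0 by rewrite subr_eq0.
move: (t ^ k) => u h; by rewrite -mulrBl -{3}[u]mulr1 -mulrBr mulfK.
Qed.

Lemma alg_mono (F : fieldType) (c v w Xa Xb Ya Yb : F) : v - 1 != 0 -> w - 1 != 0 ->
  c * ((Ya * v * v - Xa * v) / (v - 1)) * ((Yb * w - Xb) / (w - 1)) =
  c / ((v - 1) * (w - 1)) * (v * v * w) * (Ya * Yb) +
  (c / ((v - 1) * (w - 1)) * (- (v * v)) * (Xb * Ya) +
  (c / ((v - 1) * (w - 1)) * (- (v * w)) * (Xa * Yb) +
  (c / ((v - 1) * (w - 1)) * v * (Xa * Xb) + 0))).
Proof. by move=> hv hw; field; rewrite hv hw. Qed.

Lemma alg_alt (F : fieldType) (C u Ux Uy : F) : u - 1 != 0 ->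
  C * ((Uy * u * u - Ux * u) / (u - 1)) * ((Uy * u - Ux) / (u - 1)) =
  Ux * Uy * (- (2%:R) * u * u * C / ((u - 1) * (u - 1))) +
  (C * u * u * u / ((u - 1) * (u - 1)) * (Uy * Uy) +
  (C * u / ((u - 1) * (u - 1)) * (Ux * Ux) + 0)).
Proof. by move=> hu; field; rewrite hu. Qed.

Definition mono (a b : nat) (x y : int) : Qq := (q ^ x) ^+ a * (q ^ y) ^+ b.

Inductive qp : (int -> int -> Qq) -> Prop :=
| qp0 : qp (fun _ _ => 0)
| qpM c a b f : qp f -> qp (fun x y => c * mono a b x y + f x y)
| qpE f g : qp f -> (forall x y, f x y = g x y) -> qp g.

Lemma qp_add f g : qp f -> qp g -> qp (fun x y => f x y + g x y).
Proof.
move=> hf hg; elim: hf g hg => [|c a b f' _ IH|f' g' _ IH E] g hg.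
- by apply: (qpE _ _ hg) => x y /=; rewrite add0r.
- by apply: (qpE _ _ (qpM c a b _ (IH g hg))) => x y /=; rewrite addrA.
- by apply: (qpE _ _ (IH g hg)) => x y /=; rewrite E.
Qed.

Lemma qp_eval f : qp f -> exists P, forall x y, f x y = qpoly_eval P x y.
Proof.
elim => [|c a b f' _ [P HP]|f' g' _ [P HP] E].
- by exists 0 => x y; rewrite /qpoly_eval !horner0.
- exists (c%:P%:P * ('X^a)%:P * 'X^b + P) => x y.
  by rewrite HP /qpoly_eval /mono !hornerE.
- by exists P => x y; rewrite -E HP.
Qed.

Definition Sop (f : int -> int -> Qq) (x y : int) : Qq :=
  gsum (x + 1) (y + 1) (fun x' => gsum x y (fun y' => f x' y' * q ^ (x' + y'))).

Lemma Sop_ext f g x y : (forall x y, f x y = g x y) -> Sop f x y = Sop g x y.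
Proof. by move=> E; apply: gsum_ext => x'; apply: gsum_ext => y'; rewrite E. Qed.

Lemma Sop_add f g x y : Sop (fun x y => f x y + g x y) x y = Sop f x y + Sop g x y.
Proof.
rewrite /Sop -gsumD; apply: gsum_ext => x'; rewrite -gsumD.
by apply: gsum_ext => y'; rewrite mulrDl.
Qed.

Lemma Sop0 x y : Sop (fun _ _ => 0) x y = 0.
Proof.
rewrite /Sop (@gsum_ext _ _ _ (fun _ => 0)) ?gsum0 // => x'.
by rewrite (@gsum_ext _ _ _ (fun _ => 0)) ?gsum0 // => y'; rewrite mul0r.
Qed.

Lemma swapz (t : Qq) (n : nat) (z : int) : (t ^+ n) ^ z = (t ^ z) ^+ n.
Proof. by rewrite !exprnP exprzAC. Qed.

Lemma gsum_prod a b c d k (f g : int -> Qq) :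
  gsum a b (fun x' => gsum c d (fun y' => k * f x' * g y')) = k * gsum a b f * gsum c d g.
Proof.
rewrite -(gsumMl a b k f) -(gsumMr a b (gsum c d g)); apply: gsum_ext => x'.
by rewrite -gsumMl.
Qed.

Lemma alg_m (F : comNzRingType) (c X Y : F) a b :
  c * (X ^+ a * Y ^+ b) * (X * Y) = c * X ^+ a.+1 * Y ^+ b.+1.
Proof. by rewrite !exprS; ring. Qed.

Lemma qXn_neq0 n : q ^+ n != 0.
Proof. by rewrite expf_neq0 // q_neq0. Qed.

Lemma Sop_geom c (v w : Qq) (f : int -> int -> Qq) x y :
  v != 0 -> v != 1 -> w != 0 -> w != 1 ->
  (forall x' y', f x' y' * q ^ (x' + y') = c * v ^ x' * w ^ y') ->
  Sop f x y = c * ((v ^ y * v * v - v ^ x * v) / (v - 1)) * ((w ^ y * w - w ^ x) / (w - 1)).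
Proof.
move=> v0 v1 w0 w1 E.
rewrite /Sop (@gsum_ext _ _ _ (fun x' => gsum x y (fun y' => c * v ^ x' * w ^ y'))); last first.
  by move=> x'; apply: gsum_ext => y'; rewrite E.
by rewrite gsum_prod !gsum_geom // !expfzDr // !expr1z.
Qed.


Lemma Sop_mono c a b : qp (Sop (fun x y => c * mono a b x y)).
Proof.
set v := q ^+ a.+1; set w := q ^+ b.+1.
have v0 : v != 0 by apply: qXn_neq0.
have w0 : w != 0 by apply: qXn_neq0.
have v1 : v != 1 by apply: qXn_neq1.
have w1 : w != 1 by apply: qXn_neq1.
have hv : v - 1 != 0 by rewrite subr_eq0; exact: v1.
have hw : w - 1 != 0 by rewrite subr_eq0; exact: w1.
set k := c / ((v - 1) * (w - 1)).
apply: (qpE _ _ (qpM (k * (v * v * w)) 0 (a.+1 + b.+1) _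
  (qpM (k * (- (v * v))) b.+1 a.+1 _
  (qpM (k * (- (v * w))) a.+1 b.+1 _
  (qpM (k * v) (a.+1 + b.+1) 0 _ qp0))))) => x y /=.
have E : forall x' y', c * mono a b x' y' * q ^ (x' + y') = c * v ^ x' * w ^ y'.
  move=> x' y'; rewrite /mono (expfzDr x' y' q_neq0) alg_m /v /w !swapz; reflexivity.
rewrite (@Sop_geom c v w _ x y v0 v1 w0 w1 E) (@alg_mono _ c v w _ _ _ _ hv hw) /mono /v /w !swapz !expr0 !mul1r !mulr1 !exprD.
rewrite /k; reflexivity.
Qed.

Lemma qp_Sop f : qp f -> qp (Sop f).
Proof.
elim => [|c a b f' _ IH|f' g _ IH E].
- by apply: (qpE _ _ qp0) => x y /=; rewrite Sop0.
- by apply: (qpE _ _ (qp_add _ _ (Sop_mono c a b) IH)) => x y /=; rewrite Sop_add.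
- by apply: (qpE _ _ IH) => x y; apply: Sop_ext.
Qed.

Lemma alt_eq (r : nat) (z : int) : (-1 : Qq) ^ z * q ^ (r%:Z * z) = (- (q ^+ r)) ^ z.
Proof. by rewrite -exprz_exp -exprnP -expfzMl mulN1r. Qed.

Definition BB := fun x y : int => (-1 : Qq) ^ (x + y).

Lemma main r : exists C g, qp g /\ forall x y,
  D r BB x y = (-1) ^ (x + y) * q ^ (r%:Z * (x + y)) * C + g x y.
Proof.
elim: r => [|r [C [g [hg HD]]]].
  exists 1, (fun _ _ => 0); split; first exact: qp0.
  by move=> x y; rewrite mul0r expr0z !mulr1 addr0.
set u := - (q ^+ r.+1).
have u0 : u != 0 by rewrite oppr_eq0; exact: qXn_neq0.
have u1 : u != 1.
  apply/negP => /eqP hu; move: (qXn_neq1 (r.+1 + r.+1) isT).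
  by rewrite exprD -mulrNN -/u hu mulr1 eqxx.
have hu : u - 1 != 0 by rewrite subr_eq0; exact: u1.
set k := (u - 1) * (u - 1).
exists (- (2%:R) * u * u * C / k).
exists (fun x y => C * u * u * u / k * mono 0 (r.+1 + r.+1) x y +
   (C * u / k * mono (r.+1 + r.+1) 0 x y + 0) + Sop g x y).
split.
  exact: (qp_add _ _ (qpM _ _ _ _ (qpM _ _ _ _ qp0)) (qp_Sop _ hg)).
move=> x y.
have E : forall x' y', ((-1) ^ (x' + y') * q ^ (r%:Z * (x' + y')) * C) * q ^ (x' + y')
   = C * u ^ x' * u ^ y'.
  move=> x' y'; rewrite alt_eq mulrAC -expfzMl mulNr -exprSr mulrC (expfzDr _ _ u0) mulrA.
  reflexivity.
have hxy : u ^ x * u ^ y = (-1) ^ (x + y) * q ^ ((r.+1)%:Z * (x + y)).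
  by rewrite alt_eq -(expfzDr _ _ u0).
have hsq : forall z, u ^ z * u ^ z = (q ^ z) ^+ (r.+1 + r.+1).
  by move=> z; rewrite -expfzMl mulrNN -exprD swapz.
have -> : D r.+1 BB x y = Sop (D r BB) x y by reflexivity.
rewrite (Sop_ext _ _ x y HD) Sop_add (@Sop_geom C u u _ x y u0 u1 u0 u1 E).
rewrite (@alg_alt _ C u (u ^ x) (u ^ y) hu) hxy !hsq /mono !expr0 mul1r mulr1 -/k.
rewrite [RHS]addrA; reflexivity.
Qed.

Theorem lemma18 (r : nat) :
  exists (C : Qq) (P : {poly {poly Qq}}),
    forall x y : int,
      D r (fun x y : int => (-1 : Qq) ^ (x + y)) x y
      = (-1) ^ (x + y) * q ^ (r%:Z * (x + y)) * C + qpoly_eval P x y.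
Proof.
have [C [g [hg HD]]] := main r.
have [P HP] := qp_eval _ hg.
exists C, P => x y; rewrite -HP; exact: (HD x y).
Qed.
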